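(* Let $r\ge 1$ and $p_1,\dots,p_r\ge 1$, and let $(\mathbb{Z}_t)_{t\in\mathbb{Z}}$ be a tensor-valued time series with $\mathbb{Z}_t\in\mathbb{R}^{p_1\times\cdots\times p_r}$ (with finite fourth moments, so that all expectations below exist). Suppose the observed series is $$\mathbb{X}_t=\mathbb{Z}_t\odot_1\boldsymbol{\Omega}_1\odot_2\boldsymbol{\Omega}_2\cdots\odot_r\boldsymbol{\Omega}_r,\qquad t=0,\pm1,\pm2,\dots,$$ where each $\boldsymbol{\Omega}_m\in\mathbb{R}^{p_m\times p_m}$ is non-singular, and that for all $t$: $\mathrm{E}[\mathrm{vec}(\mathbb{Z}_t)]=\mathbf{0}$ and $\mathrm{Cov}[\mathrm{vec}(\mathbb{Z}_t)]=\mathbf{I}$. Let $\mathcal{T}$ be a fixed set of lags. Let $\mathbb{X}^{st}_t:=\mathbb{X}_t\odot_1(\boldsymbol{\Sigma}^1_0(\mathbb{X}_t))^{-1/2}\cdots\odot_r(\boldsymbol{\Sigma}^r_0(\mathbb{X}_t))^{-1/2}$ be the standardized series, and let $c>0$ and orthogonal matrices $\mathbf{U}_m\in\mathbb{R}^{p_m\times p_m}$, $m=1,\dots,r$, be such that $\mathbb{X}^{st}_t=c\,\mathbb{Z}_t\odot_1\mathbf{U}_1\cdots\odot_r\mathbf{U}_r$ for all $t$ (such $c$ and $\mathbf{U}_m$ exist under the stated assumptions). Assume additionally one of the following: (i) for all $m=1,\dots,r$ and $\tau\in\mathcal{T}$, the matrix $\boldsymbol{\Sigma}^m_\tau(\mathbb{Z}_t)$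 is diagonal; (ii) for all $m=1,\dots,r$ and $\tau\in\mathcal{T}$, the matrix $\mathbf{B}^m_\tau(\mathbb{Z}_t)$ is diagonal; (iii) for all $m=1,\dots,r$, $i,j=1,\dots,p_m$ and $\tau\in\mathcal{T}$, the matrix $\mathbf{C}^m_{\tau ij}(\mathbb{Z}_t)$ is diagonal. Then for each fixed mode $m=1,\dots,r$, the matrix $\mathbf{U}_m^T$ diagonalizes (i.e. $\mathbf{U}_m^T\mathbf{M}\mathbf{U}_m$ is diagonal), respectively: in case (i) the matrices $\boldsymbol{\Sigma}^m_\tau(\mathbb{X}^{st}_t)$, $\tau\in\mathcal{T}$; in case (ii) the matrices $\mathbf{B}^m_\tau(\mathbb{X}^{st}_t)$, $\tau\in\mathcal{T}$; in case (iii) the matrices $\mathbf{C}^m_{\tau ij}(\mathbb{X}^{st}_t)$, $\tau\in\mathcal{T}$, $i,j=1,\dots,p_m$.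
   Context: Tensor notation: for $\mathbb{X}\in\mathbb{R}^{p_1\times\cdots\times p_r}$, the $m$-mode vectors are obtained by fixing all indices except the $m$-th and letting the $m$-th vary; there are $\rho_m:=\prod_{i\ne m}p_i$ of them, each of length $p_m$. The $m$-flattening $\mathbf{X}^{(m)}\in\mathbb{R}^{p_m\times\rho_m}$ is the matrix obtained by stacking all $m$-mode vectors as columns in a fixed, consistent order. For $\mathbf{A}\in\mathbb{R}^{p_m\times p_m}$, $\mathbb{X}\odot_m\mathbf{A}$ is the tensor of the same size with entries $(\mathbb{X}\odot_m\mathbf{A})_{i_1\cdots i_r}=\sum_{j}x_{i_1\cdots i_{m-1}\,j\,i_{m+1}\cdots i_r}a_{i_m j}$, equivalently $(\mathbb{X}\odot_m\mathbf{A})^{(m)}=\mathbf{A}\mathbf{X}^{(m)}$; $\mathbb{X}\odot_1\mathbf{A}_1\cdots\odot_r\mathbf{A}_r$ means applying these successively. $\mathrm{vec}$ denotes vectorization. $\mathbf{e}_i$ is the $i$-th standard basis vector of $\mathbb{R}^{p_m}$, $\mathbf{E}^{ij}:=\mathbf{e}_i\mathbf{e}_j^T$, and $\mathbf{M}^{-1/2}$ denotes the unique symmetric positive definite inverse square root. For a tensor-valued series $\mathbb{X}_t$ with $m$-flattenings $\mathbf{X}^{(m)}_t$, define the $p_m\times p_m$ matrices $\boldsymbol{\Sigma}^m_\tau(\mathbb{X}_t):=\frac{1}{\rho_m}\mathrm{E}[\mathbf{X}^{(m)}_t(\mathbf{X}^{(m)}_{t+\tau})^T]$ (so $\boldsymbol{\Sigma}^m_0$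 is the $m$-mode covariance matrix), $\mathbf{B}^m_\tau(\mathbb{X}_t):=\frac{1}{\rho_m}\mathrm{E}[\mathbf{X}^{(m)}_t(\mathbf{X}^{(m)}_{t+\tau})^T\mathbf{X}^{(m)}_{t+\tau}(\mathbf{X}^{(m)}_t)^T]$, for lags $\tau_1,\tau_2,\tau_3,\tau_4$ and $i,j=1,\dots,p_m$: $\mathbf{B}^m_{\tau_1\tau_2\tau_3\tau_4 ij}(\mathbb{X}_t):=\frac{1}{\rho_m}\mathrm{E}\big[(\mathbf{e}_i^T\mathbf{X}^{(m)}_{t+\tau_1}(\mathbf{X}^{(m)}_{t+\tau_2})^T\mathbf{e}_j)\cdot\mathbf{X}^{(m)}_{t+\tau_3}(\mathbf{X}^{(m)}_{t+\tau_4})^T\big]$, and $\mathbf{C}^m_{\tau ij}(\mathbb{X}_t):=\mathbf{B}^m_{0\tau\tau0ij}(\mathbb{X}_t)+\mathbf{B}^m_{0\tau0\tau ij}(\mathbb{X}_t)-\mathbf{B}^m_{\tau\tau00ij}(\mathbb{X}_t)-\boldsymbol{\Sigma}^m_0(\mathbb{X}_t)(\mathbf{E}^{ij}+\mathbf{E}^{ji}+\mathbf{I})\boldsymbol{\Sigma}^m_0(\mathbb{X}_t)^T$. *)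

(* Defs.v *)
From HB Require Import structures.
From mathcomp Require Import all_boot all_order all_algebra.
From mathcomp Require Import all_classical all_reals all_analysis.
Set Implicit Arguments. Unset Strict Implicit. Unset Printing Implicit Defensive.
Import Order.TTheory GRing.Theory Num.Theory.
Local Open Scope ring_scope.

Definition midx (r : nat) (p : 'I_r -> nat) := {dffun forall k : 'I_r, 'I_(p k)}.
Definition tensor (R : Type) (r : nat) (p : 'I_r -> nat) := midx p -> R.

Definition rho (r : nat) (p : 'I_r -> nat) (m : 'I_r) : nat := (\prod_(k < r | k != m) p k)%N.

(* Column index set of the m-flattening: the multi-indices with the m-th
   coordinate fixed to 0, i.e. all choices of the other coordinates
   (there are rho_m of them); the fixed consistent order is enum order. *)
Definition colidx (r : nat) (p : 'I_r -> nat) (m : 'I_r) :=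
  {i : midx p | nat_of_ord (i m) == 0%N}.

Definition setidx (r : nat) (p : 'I_r -> nat) (i : midx p) (m : 'I_r) (a : 'I_(p m))
  : midx p := finfun (@dfwith _ (fun k => 'I_(p k)) (fun k => i k) m a).

Definition flat (R : Type) (r : nat) (p : 'I_r -> nat) (m : 'I_r) (X : tensor R p)
  : 'M[R]_(p m, #|{: colidx p m}|) :=
  \matrix_(a < p m, j < #|{: colidx p m}|) X (setidx (val (enum_val j)) a).

Definition tmul (R : pzRingType) (r : nat) (p : 'I_r -> nat) (m : 'I_r)
  (A : 'M[R]_(p m)) (X : tensor R p) : tensor R p :=
  fun i => \sum_(j < p m) X (setidx i j) * A (i m) j.

Definition tmul_all (R : pzRingType) (r : nat) (p : 'I_r -> nat)
  (A : forall m : 'I_r, 'M[R]_(p m)) (X : tensor R p) : tensor R p :=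
  foldl (fun Y m => tmul (A m) Y) X (enum 'I_r).

Definition orthogonal_mx (R : pzRingType) (n : nat) (U : 'M[R]_n) : Prop :=
  U *m U^T = 1%:M.

Definition posdef_mx (R : numDomainType) (n : nat) (S : 'M[R]_n) : Prop :=
  S^T = S /\ forall v : 'rV[R]_n, v != 0 -> 0 < (v *m S *m v^T) 0 0.

(* M^{-1/2}: the (unique, for M symmetric positive definite) symmetric
   positive definite S with S S M = I; 0 if no such S exists. *)
Definition invsqrtmx (R : realType) (n : nat) (M : 'M[R]_n) : 'M[R]_n :=
  xget 0 [set S : 'M[R]_n | posdef_mx S /\ S *m S *m M = 1%:M].

Section Moments.
Context {d : measure_display} {T : measurableType d} {R : realType}
  (P : probability T R).

Definition Emx (a b : nat) (F : T -> 'M[R]_(a, b)) : 'M[R]_(a, b) :=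
  \matrix_(i < a, j < b) fine ('E_P[fun w => F w i j])%E.

Context {r : nat} {p : 'I_r -> nat}.
Implicit Types (X : int -> T -> tensor R p) (m : 'I_r) (t tau : int).

Definition fprod X m t (s1 s2 : int) (w : T) : 'M[R]_(p m) :=
  flat m (X (t + s1) w) *m (flat m (X (t + s2) w))^T.

Definition Sigma m tau X t : 'M[R]_(p m) :=
  (rho p m)%:R^-1 *: Emx (fprod X m t 0 tau).

Definition Bmx m tau X t : 'M[R]_(p m) :=
  (rho p m)%:R^-1 *: Emx (fun w => fprod X m t 0 tau w *m fprod X m t tau 0 w).

Definition B4 m (t1 t2 t3 t4 : int) (i j : 'I_(p m)) X t : 'M[R]_(p m) :=
  (rho p m)%:R^-1 *: Emx (fun w => fprod X m t t1 t2 w i j *: fprod X m t t3 t4 w).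

Definition Cmx m tau (i j : 'I_(p m)) X t : 'M[R]_(p m) :=
  @B4 m 0 tau tau 0 i j X t + @B4 m 0 tau 0 tau i j X t - @B4 m tau tau 0 0 i j X t
  - Sigma m 0 X t *m (delta_mx i j + delta_mx j i + 1%:M) *m (Sigma m 0 X t)^T.

End Moments.

Arguments B4 {d T R} P {r p} m t1 t2 t3 t4 i j X t.
Arguments Cmx {d T R} P {r p} m tau i j X t.

(* Main.v *)
Require Import Defs.
From HB Require Import structures.
From mathcomp Require Import all_boot all_order all_algebra.
From mathcomp Require Import all_classical all_reals all_analysis.
From mathcomp Require Import ring lra.
Set Implicit Arguments. Unset Strict Implicit. Unset Printing Implicit Defensive.
Import Order.TTheory GRing.Theory Num.Theory.
Local Open Scope ring_scope.

Lemma amgm (R : realType) (u v : R) : u * v <= (u ^+ 2 + v ^+ 2) / 2.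
Proof. have := sqr_ge0 (u - v); nra. Qed.
Lemma ineq4 (R : realType) (a b c d : R) : 0 <= a -> 0 <= b -> 0 <= c -> 0 <= d ->
  a * b * c * d <= a ^+ 4 + b ^+ 4 + c ^+ 4 + d ^+ 4.
Proof.
move=> ha hb hc hd.
have e : forall x : R, x ^+ 4 = (x ^+ 2) ^+ 2 by move=> x; rewrite -exprM.
rewrite !e.
have h1 := amgm a b. have h2 := amgm c d.
have h3 : a * b * (c * d) <= (a ^+ 2 + b ^+ 2) / 2 * ((c ^+ 2 + d ^+ 2) / 2).
  apply: ler_pM => //; by apply: mulr_ge0.
have h4 := amgm (a ^+ 2 + b ^+ 2) (c ^+ 2 + d ^+ 2).
have h5 := amgm (a ^+ 2) (b ^+ 2).
have h6 := amgm (c ^+ 2) (d ^+ 2).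
move: h3 h4 h5 h6.
set A := a ^+ 2; set B := b ^+ 2; set C := c ^+ 2; set D := d ^+ 2.
rewrite -mulrA. move=> h3 h4 h5 h6.
have h7 : (A + B) ^+ 2 = A ^+ 2 + B ^+ 2 + 2 * (A * B) by rewrite sqrrD; ring.
have h8 : (C + D) ^+ 2 = C ^+ 2 + D ^+ 2 + 2 * (C * D) by rewrite sqrrD; ring.
have h9 : (A + B) / 2 * ((C + D) / 2) = (A + B) * (C + D) / 4 by field.
rewrite h7 h8 in h4. rewrite h9 in h3.
have := sqr_ge0 A; have := sqr_ge0 B; have := sqr_ge0 C; have := sqr_ge0 D. lra.
Qed.
Lemma ineq2 (R : realType) (a b : R) : a * b <= 1 + a ^+ 4 + b ^+ 4.
Proof.
have e : forall x : R, x ^+ 4 = (x ^+ 2) ^+ 2 by move=> x; rewrite -exprM.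
rewrite !e.
have h1 := amgm a b. have h2 := amgm 1 (a ^+ 2). have h3 := amgm 1 (b ^+ 2).
have h4 := sqr_ge0 (a ^+ 2). have h5 := sqr_ge0 (b ^+ 2).
rewrite expr1n mul1r in h2 h3. lra.
Qed.

Section Tensor.
Context {R : realType} {r : nat} {p : 'I_r -> nat}.
Hypothesis hp : forall m : 'I_r, (0 < p m)%N.
Implicit Types (i : midx p) (m k : 'I_r).

Lemma setidx_same i m (a : 'I_(p m)) : setidx i a m = a.
Proof. by rewrite /setidx ffunE; apply: dfwith_in. Qed.

Lemma setidx_other i m (a : 'I_(p m)) k : k != m -> setidx i a k = i k.
Proof. by move=> km; rewrite /setidx ffunE; apply: dfwith_out; rewrite eq_sym. Qed.

Lemma setidx_id i m : setidx i (i m) = i.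
Proof.
apply/ffunP => k; case: (eqVneq k m) => [->|km].
  by rewrite setidx_same.
by rewrite setidx_other.
Qed.

Lemma setidx_twice i m (a b : 'I_(p m)) : setidx (setidx i a) b = setidx i b :> midx p.
Proof.
apply/ffunP => k; case: (eqVneq k m) => [->|km].
  by rewrite !setidx_same.
by rewrite !setidx_other.
Qed.

Lemma setidx_comm i m k (a : 'I_(p m)) (b : 'I_(p k)) : k != m ->
  setidx (setidx i a) b = setidx (setidx i b) a.
Proof.
move=> km; apply/ffunP => l; case: (eqVneq l m) => [->|lm].
  by rewrite setidx_other 1?eq_sym // !setidx_same.
case: (eqVneq l k) => [->|lk].
  by rewrite setidx_same setidx_other // setidx_same.
by rewrite !setidx_other.
Qed.

Definition o k : 'I_(p k) := Ordinal (hp k).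

Lemma split_big (k : 'I_r) (P : pred (midx p)) (g : midx p -> R) :
  (forall i (s : 'I_(p k)), P (setidx i s) = P i) ->
  \sum_(i | P i) g i = \sum_(i | P i && (i k == o k)) \sum_(s < p k) g (setidx i s).
Proof.
move=> HP.
rewrite (partition_big (fun i => setidx i (o k)) (fun i0 => P i0 && (i0 k == o k))); last first.
  by move=> i Pi; rewrite HP Pi setidx_same eqxx.
apply: eq_bigr => i0 /andP[Pi0 /eqP i0k].
rewrite (reindex_onto (fun s : 'I_(p k) => setidx i0 s) (fun i => i k)); last first.
  move=> i /andP[Pi /eqP <-]; by rewrite setidx_twice setidx_id.
apply: eq_bigl => s.
by rewrite HP Pi0 setidx_twice -i0k setidx_id eqxx setidx_same eqxx.
Qed.

Definition G m (Y Y' : tensor R p) := flat m Y *m (flat m Y')^T.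

Lemma GE m (Y Y' : tensor R p) a b :
  G m Y Y' a b = \sum_(i : midx p | i m == o m) Y (setidx i a) * Y' (setidx i b).
Proof.
rewrite /G mxE.
under eq_bigr do rewrite !mxE.
rewrite -(big_enum_val (fun x : colidx p m => Y (setidx (val x) a) * Y' (setidx (val x) b))).
rewrite (reindex_omap (val : colidx p m -> midx p) insub); last first.
  by move=> i im; rewrite insubT //.
apply: eq_bigl => x.
by rewrite valK eqxx andbT; case: x => i hi /=; rewrite -[_ == o m]/(nat_of_ord (i m) == 0%N) hi ?inE.
Qed.


Lemma flat_tmul_same m (A : 'M[R]_(p m)) (Y : tensor R p) :
  flat m (tmul A Y) = A *m flat m Y.
Proof.
apply/matrixP => a j; rewrite !mxE /tmul.
by apply: eq_bigr => l _; rewrite setidx_twice setidx_same !mxE mulrC.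
Qed.

Lemma G_tmul_same m (A : 'M[R]_(p m)) (Y Y' : tensor R p) :
  G m (tmul A Y) (tmul A Y') = A *m G m Y Y' *m A^T.
Proof. by rewrite /G !flat_tmul_same trmx_mul !mulmxA. Qed.

Lemma G_tmul_other m k (A : 'M[R]_(p k)) (Y Y' : tensor R p) :
  k != m -> A^T *m A = 1%:M ->
  G m (tmul A Y) (tmul A Y') = G m Y Y'.
Proof.
move=> km AA; apply/matrixP => a b; rewrite !GE /tmul.
have HP : forall i (s : 'I_(p k)), (setidx i s m == o m) = (i m == o m).
  by move=> i s; rewrite setidx_other // eq_sym.
rewrite (@split_big k (fun i : midx p => i m == o m)) //.
rewrite [RHS](@split_big k (fun i : midx p => i m == o m)) //.
apply: eq_bigr => i _.
pose W (j : 'I_(p k)) := Y (setidx (setidx i j) a).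
pose W' (j : 'I_(p k)) := Y' (setidx (setidx i j) b).
transitivity (\sum_(s < p k) (\sum_(j < p k) W j * A s j) * (\sum_(l < p k) W' l * A s l)).
  have Hk : forall x (c : 'I_(p m)), setidx x c k = x k by move=> x c; exact: setidx_other.
  apply: eq_bigr => s _; rewrite !Hk setidx_same; congr (_ * _);
    apply: eq_bigr => j _; by rewrite setidx_comm // setidx_twice.
transitivity (\sum_(j < p k) \sum_(l < p k) W j * W' l * (A^T *m A) j l).
  under eq_bigr do rewrite mulr_suml.
  under eq_bigr do under eq_bigr do rewrite mulr_sumr.
  rewrite exchange_big; apply: eq_bigr => j _.
  rewrite exchange_big; apply: eq_bigr => l _.
  rewrite mxE mulr_sumr; apply: eq_bigr => s _; rewrite mxE.
  by rewrite mulrACA [A s j * _]mulrC mulrACA.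
apply: eq_bigr => j _; rewrite (bigD1 j) //= big1 ?addr0.
  by rewrite AA mxE eqxx mulr1.
by move=> l lj; rewrite AA mxE eq_sym (negbTE lj) mulr0.
Qed.

Lemma G_fold (U : forall k : 'I_r, 'M[R]_(p k)) m (s : seq 'I_r) (Y Y' : tensor R p) :
  (forall k, U k *m (U k)^T = 1%:M) -> uniq s ->
  G m (foldl (fun Y k => tmul (U k) Y) Y s) (foldl (fun Y k => tmul (U k) Y) Y' s)
  = if m \in s then U m *m G m Y Y' *m (U m)^T else G m Y Y'.
Proof.
move=> HU; elim: s Y Y' => [|k s IH] Y Y' /=; first by [].
move=> /andP[ks us]; rewrite IH // in_cons.
case: (eqVneq k m) => [km|km].
  subst k; rewrite (negbTE ks) /=; exact: G_tmul_same.
have E : G m (tmul (U k) Y) (tmul (U k) Y') = G m Y Y' by apply: G_tmul_other => //; exact: mulmx1C.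
by rewrite E.

Qed.

Lemma G_tmul_all (U : forall k : 'I_r, 'M[R]_(p k)) m (Y Y' : tensor R p) :
  (forall k, U k *m (U k)^T = 1%:M) ->
  G m (tmul_all U Y) (tmul_all U Y') = U m *m G m Y Y' *m (U m)^T.
Proof.
by move=> HU; rewrite /tmul_all G_fold ?enum_uniq // mem_enum.
Qed.

End Tensor.

Section Prob.
Context {d : measure_display} {T : measurableType d} {R : realType}
  (P : probability T R).

Definition Intg (f : T -> R) := P.-integrable setT (EFin \o f).

Lemma Intg_sum (I : finType) (Q : pred I) (F : I -> T -> R) :
  (forall i, Intg (F i)) -> Intg (fun w => \sum_(i | Q i) F i w).
Proof.
move=> HF; rewrite /Intg.
apply: (eq_integrable measurableT (fun w => \sum_(i | Q i) (F i w)%:E)).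
  by move=> w _; rewrite /= sumEFin.
by apply: integrable_sum => // i _; exact: HF.
Qed.

Lemma Intg_scale (k : R) (f : T -> R) : Intg f -> Intg (fun w => k * f w).
Proof.
move=> Hf; rewrite /Intg.
apply: (eq_integrable measurableT (fun w => (k%:E * (EFin \o f) w)%E)).
  by move=> w _; rewrite /= EFinM.
exact: integrableZl.
Qed.

Lemma E_sum (I : finType) (Q : pred I) (F : I -> T -> R) :
  (forall i, Intg (F i)) ->
  fine 'E_P[fun w => \sum_(i | Q i) F i w] = \sum_(i | Q i) fine 'E_P[F i].
Proof.
move=> HF; rewrite expectation.unlock.
under eq_integral do rewrite -sumEFin.
rewrite integral_sum //.
rewrite -sum_fine // => i _; apply: integrable_fin_num => //; exact: HF.
Qed.

Lemma E_scale (k : R) (f : T -> R) : Intg f ->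
  fine 'E_P[fun w => k * f w] = k * fine 'E_P[f].
Proof.
move=> Hf; rewrite expectation.unlock.
under eq_integral do rewrite EFinM.
rewrite integralZl //.
have := integrable_fin_num (measurableT) Hf.
by case: (\int[P]_(x in _) _)%E.
Qed.

Lemma E_ext (f g : T -> R) : (forall w, f w = g w) -> ('E_P[f] = 'E_P[g])%E.
Proof. by move=> fg; congr expectation; apply/funext. Qed.

Lemma Intg_ext (f g : T -> R) : (forall w, f w = g w) -> Intg f -> Intg g.
Proof. by move=> fg; have -> : f = g by apply/funext. Qed.


Lemma EmxL n1 n2 n3 n4 (A : 'M[R]_(n1,n2)) (B : 'M[R]_(n3,n4)) (F : T -> 'M[R]_(n2,n3)) (k : R) :
  (forall i j, Intg (fun w => F w i j)) ->
  Emx P (fun w => k *: (A *m F w *m B)) = k *: (A *m Emx P F *m B).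
Proof.
move=> HF; apply/matrixP => i j; rewrite !mxE.
rewrite (E_ext (g := fun w => \sum_(l < n3) \sum_(m < n2) (k * (A i m * B l j)) * F w m l)); last first.
  move=> w; rewrite !mxE mulr_sumr; apply: eq_bigr => l _.
  rewrite !mxE mulr_suml mulr_sumr; apply: eq_bigr => m _; ring.
rewrite E_sum; last by move=> l; apply: Intg_sum => m; apply: Intg_scale.
rewrite mulr_sumr; apply: eq_bigr => l _.
rewrite E_sum; last by move=> m; apply: Intg_scale.
rewrite !mxE mulr_suml mulr_sumr; apply: eq_bigr => m _; rewrite E_scale // !mxE; ring.
Qed.

Lemma Emx_sum2 n a b (al : 'I_n -> 'I_n -> R) (H : 'I_n -> 'I_n -> T -> 'M[R]_(a,b)) :
  (forall k l i j, Intg (fun w => H k l w i j)) ->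
  Emx P (fun w => \sum_k \sum_l al k l *: H k l w) = \sum_k \sum_l al k l *: Emx P (H k l).
Proof.
move=> HH; apply/matrixP => i j; rewrite mxE summxE.
rewrite (E_ext (g := fun w => \sum_k \sum_l al k l * H k l w i j)); last first.
  by move=> w; rewrite summxE; apply: eq_bigr => k _; rewrite summxE; apply: eq_bigr => l _; rewrite mxE.
rewrite E_sum; last by move=> k; apply: Intg_sum => l; apply: Intg_scale.
apply: eq_bigr => k _; rewrite E_sum; last by move=> l; apply: Intg_scale.
by rewrite summxE; apply: eq_bigr => l _; rewrite E_scale // !mxE.
Qed.


Lemma Intg_add (f g : T -> R) : Intg f -> Intg g -> Intg (fun w => f w + g w).
Proof.
move=> Hf Hg; apply: (eq_integrable measurableT ((EFin \o f) \+ (EFin \o g))%E).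
  by move=> w _; rewrite /= EFinD.
exact: integrableD.
Qed.

Lemma Intg_cst (k : R) : Intg (fun _ => k).
Proof. exact: finite_measure_integrable_cst. Qed.

Lemma Intg_le (f g : T -> R) : measurable_fun setT f -> (forall w, `|f w| <= g w) ->
  Intg g -> Intg f.
Proof.
move=> mf fg Hg; apply: (le_integrable measurableT _ _ Hg).
  exact/measurable_realfun.measurable_EFinP.
by move=> w _ /=; rewrite lee_fin (le_trans (fg w)) // ler_norm.
Qed.

End Prob.

Section Alg.
Context {R : realType}.

Lemma trmxZ' m n (k : R) (A : 'M[R]_(m, n)) : (k *: A)^T = k *: A^T.
Proof. by apply/matrixP => i j; rewrite !mxE. Qed.

Lemma conjZ n1 n2 n3 n4 (A : 'M[R]_(n1,n2)) (E : 'M[R]_(n2,n3)) (B : 'M[R]_(n3,n4)) k :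
  A *m (k *: E) *m B = k *: (A *m E *m B).
Proof. by rewrite -scalemxAr -scalemxAl. Qed.

Lemma conjK n (U M : 'M[R]_n) k : U^T *m U = 1%:M ->
  U^T *m (k *: (U *m M *m U^T)) *m U = k *: M.
Proof.
move=> HU; rewrite conjZ; congr (_ *: _).
by rewrite !mulmxA HU mul1mx -mulmxA HU mulmx1.
Qed.

Lemma prodconj n (U A B : 'M[R]_n) a b : U^T *m U = 1%:M ->
  (a *: (U *m A *m U^T)) *m (b *: (U *m B *m U^T)) = (a * b) *: (U *m (A *m B) *m U^T).
Proof.
move=> HU; rewrite -scalemxAl -scalemxAr scalerA; congr (_ *: _).
rewrite !mulmxA; congr (_ *m _).
by rewrite -[U *m A *m U^T *m U]mulmxA HU mulmx1.
Qed.

Lemma is_diag_scale n (M : 'M[R]_n) k : is_diag_mx M -> is_diag_mx (k *: M).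
Proof.
by move/is_diag_mxP => H; apply/is_diag_mxP => i j ij; rewrite mxE H // mulr0.
Qed.

Lemma ALG n (U F G : 'M[R]_n) (a : R) i j :
  ((a *: (U *m F *m U^T)) i j) *: (a *: (U *m G *m U^T)) =
  (a * a) *: (U *m (\sum_k \sum_l (U i k * U j l) *: (F k l *: G)) *m U^T).
Proof.
have -> : \sum_k \sum_l (U i k * U j l) *: (F k l *: G) =
          (\sum_k \sum_l (U i k * U j l * F k l)) *: G.
  rewrite scaler_suml; apply: eq_bigr => k _.
  by rewrite scaler_suml; apply: eq_bigr => l _; rewrite scalerA.
rewrite conjZ scalerA scalerA; congr (_ *: _).
rewrite mxE mulrAC; congr (_ * _).
rewrite mxE exchange_big /=; apply: eq_bigr => l _.
rewrite !mxE mulr_suml; apply: eq_bigr => k _; ring.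
Qed.

Lemma sum_delta n (f : 'I_n -> 'I_n -> R) a b :
  \sum_k \sum_l f k l * ((a == k) && (b == l))%:R = f a b.
Proof.
rewrite (bigD1 a) //= [X in _ + X]big1 => [|k ka]; last first.
  by apply: big1 => l _; rewrite eq_sym (negbTE ka) mulr0.
rewrite addr0 (bigD1 b) //= [X in _ + X]big1 => [|l lb]; last by rewrite eqxx eq_sym (negbTE lb) mulr0.
by rewrite !eqxx mulr1 addr0.
Qed.


Lemma mxDE m n (A B : 'M[R]_(m,n)) i j : (A + B) i j = A i j + B i j.
Proof. by rewrite mxE. Qed.
Lemma mxBE m n (A B : 'M[R]_(m,n)) i j : (A - B) i j = A i j - B i j.
Proof. by rewrite !mxE. Qed.
Lemma mxZE m n (k : R) (A : 'M[R]_(m,n)) i j : (k *: A) i j = k * A i j.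
Proof. by rewrite mxE. Qed.
Lemma mxSE m n q (f : 'I_q -> 'I_q -> R) (A : 'I_q -> 'I_q -> 'M[R]_(m,n)) i j :
  (\sum_k \sum_l f k l *: A k l) i j = \sum_k \sum_l f k l * A k l i j.
Proof.
rewrite summxE; apply: eq_bigr => k _; rewrite summxE; apply: eq_bigr => l _.
exact: mxZE.
Qed.
Lemma idE n (a b : 'I_n) : (1%:M : 'M[R]_n) a b = (a == b)%:R.
Proof. by rewrite mxE. Qed.
Lemma deltaE n (k l a b : 'I_n) : (delta_mx k l : 'M[R]_n) a b = ((a == k) && (b == l))%:R.
Proof. by rewrite mxE. Qed.
Lemma conjdelta n (U : 'M[R]_n) i j a b : (U^T *m delta_mx i j *m U) a b = U i a * U j b.
Proof.
rewrite mxE (bigD1 j) //= [X in _ + X]big1 => [|l lj].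
  rewrite addr0 mxE (bigD1 i) //= [X in _ + X]big1 => [|k ki].
    by rewrite addr0 !mxE !eqxx mulr1 mulrC.
  by rewrite !mxE (negbTE ki) mulr0.
rewrite mxE big1 ?mul0r // => k _.
by rewrite !mxE (negbTE lj) andbF mulr0.
Qed.
Lemma sum2_lin q (f x y z : 'I_q -> 'I_q -> R) :
  \sum_k \sum_l f k l * x k l + \sum_k \sum_l f k l * y k l - \sum_k \sum_l f k l * z k l
  = \sum_k \sum_l f k l * (x k l + y k l - z k l).
Proof.
rewrite -big_split -sumrB /=; apply: eq_bigr => k _.
rewrite -big_split -sumrB /=; apply: eq_bigr => l _; ring.
Qed.


Lemma conj_lin n (U N1 N2 N3 E : 'M[R]_n) (c4 ka : R) : U^T *m U = 1%:M ->
  U^T *m (c4 *: (U *m N1 *m U^T) + c4 *: (U *m N2 *m U^T) - c4 *: (U *m N3 *m U^T)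
     - ka *: (ka *: E)) *m U
  = c4 *: N1 + c4 *: N2 - c4 *: N3 - ka *: (ka *: (U^T *m E *m U)).
Proof.
move=> HU; rewrite !mulmxBr !mulmxDr !mulmxBl !mulmxDl !conjK //.
by rewrite -!scalemxAr -!scalemxAl.
Qed.

Lemma conj_E n (U : 'M[R]_n) i j : U^T *m U = 1%:M ->
  U^T *m (delta_mx i j + delta_mx j i + 1%:M) *m U =
  U^T *m delta_mx i j *m U + U^T *m delta_mx j i *m U + 1%:M.
Proof. by move=> HU; rewrite !mulmxDr !mulmxDl mulmx1 HU. Qed.

End Alg.

Unset Implicit Arguments.
Set Strict Implicit.

Theorem theorem2 (d : measure_display) (T : measurableType d) (R : realType)
  (P : probability T R) (r : nat) (p : 'I_r -> nat)
  (hr : (0 < r)%N) (hp : forall m : 'I_r, (0 < p m)%N)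
  (Z : int -> T -> tensor R p)
  (Omega : forall m : 'I_r, 'M[R]_(p m))
  (lags : set int)
  (c : R) (U : forall m : 'I_r, 'M[R]_(p m)) :
  (* finite fourth moments *)
  (forall t i, measurable_fun setT (fun w => Z t w i)) ->
  (forall t i, P.-integrable setT (fun w => ((Z t w i) ^+ 4)%:E)) ->
  (* E[vec Z_t] = 0, Cov[vec Z_t] = I *)
  (forall t i, ('E_P[fun w => Z t w i] = 0)%E) ->
  (forall t i j, covariance P (fun w => Z t w i) (fun w => Z t w j) = (i == j)%:R%:E) ->
  (* non-singular mixing matrices *)
  (forall m, Omega m \in unitmx) ->
  let X := fun t w => tmul_all Omega (Z t w) in
  let Xst := fun t w => tmul_all (fun m => invsqrtmx (Sigma P m 0 X t)) (X t w) in
  0 < c ->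
  (forall m, orthogonal_mx (U m)) ->
  (forall t w, Xst t w = (fun i => c * tmul_all U (Z t w) i)) ->
  ((forall m tau t, lags tau -> is_diag_mx (Sigma P m tau Z t)) ->
     forall m tau t, lags tau -> is_diag_mx ((U m)^T *m Sigma P m tau Xst t *m U m))
  /\
  ((forall m tau t, lags tau -> is_diag_mx (Bmx P m tau Z t)) ->
     forall m tau t, lags tau -> is_diag_mx ((U m)^T *m Bmx P m tau Xst t *m U m))
  /\
  ((forall m tau (i j : 'I_(p m)) t, lags tau -> is_diag_mx (Cmx P m tau i j Z t)) ->
     forall m tau (i j : 'I_(p m)) t, lags tau ->
       is_diag_mx ((U m)^T *m Cmx P m tau i j Xst t *m U m)).
Proof.
move=> mZ iZ4 EZ covZ _ X Xst c0 HU HXst.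
have HUt : forall k, (U k)^T *m U k = 1%:M by move=> k; apply: mulmx1C; exact: HU.
have HU' : forall k, U k *m (U k)^T = 1%:M by exact: HU.
have Xst_eq : Xst = fun t w i => c * tmul_all U (Z t w) i.
  by apply/funext => t; apply/funext => w; exact: HXst.
clearbody Xst; subst Xst.
set Xs : int -> T -> tensor R p := fun t w i => c * tmul_all U (Z t w) i.
have flat_scale : forall m (Y : tensor R p), flat m (fun i => c * Y i) = c *: flat m Y.
  by move=> m Y; apply/matrixP => a b; rewrite !mxE.
have FX : forall m t s1 s2 w, Defs.fprod Xs m t s1 s2 w =
    (c ^+ 2) *: (U m *m Defs.fprod Z m t s1 s2 w *m (U m)^T).
  move=> m t s1 s2 w; rewrite /Defs.fprod /Xs !flat_scale trmxZ' -scalemxAl -scalemxAr scalerA -expr2.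
  congr (_ *: _); exact: (G_tmul_all hp m _ _ HU').
have n4 : forall x : R, `|x| ^+ 4 = x ^+ 4.
  by move=> x; rewrite -normrX ger0_norm // (exprM x 2 2) sqr_ge0.
have IntZ2 : forall t t' x y, Intg P (fun w => Z t w x * Z t' w y).
  move=> t t' x y; apply: (Intg_le (g := fun w => 1 + Z t w x ^+ 4 + Z t' w y ^+ 4)).
  - by apply: measurable_realfun.measurable_funM; exact: mZ.
  - by move=> w; rewrite normrM -(n4 (Z t w x)) -(n4 (Z t' w y)); exact: ineq2.
  - apply: Intg_add; [apply: Intg_add; [exact: Intg_cst|exact: iZ4]|exact: iZ4].
have IntZ4 : forall t1 t2 t3 t4 x1 x2 x3 x4,
    Intg P (fun w => Z t1 w x1 * Z t2 w x2 * Z t3 w x3 * Z t4 w x4).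
  move=> t1 t2 t3 t4 x1 x2 x3 x4.
  apply: (Intg_le (g := fun w => Z t1 w x1 ^+ 4 + Z t2 w x2 ^+ 4 + Z t3 w x3 ^+ 4 + Z t4 w x4 ^+ 4)).
  - by do 3 apply: measurable_realfun.measurable_funM => //.
  - move=> w; rewrite !normrM -(n4 (Z t1 w x1)) -(n4 (Z t2 w x2)) -(n4 (Z t3 w x3)) -(n4 (Z t4 w x4)).
    by apply: ineq4.
  - by repeat apply: Intg_add; apply: iZ4.
have GZ : forall m t s1 s2 w a b, Defs.fprod Z m t s1 s2 w a b =
    \sum_(i : midx p | i m == o hp m) Z (t + s1) w (setidx i a) * Z (t + s2) w (setidx i b).
  by move=> m t s1 s2 w a b; rewrite -GE.
have IntF : forall m t s1 s2 a b, Intg P (fun w => Defs.fprod Z m t s1 s2 w a b).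
  move=> m t s1 s2 a b; apply: (Intg_ext (f := fun w => \sum_(i : midx p | i m == o hp m)
     Z (t + s1) w (setidx i a) * Z (t + s2) w (setidx i b))).
    by move=> w; rewrite GZ.
  by apply: Intg_sum => i; exact: IntZ2.
have IntFF : forall m t s1 s2 s3 s4 a b a' b',
    Intg P (fun w => Defs.fprod Z m t s1 s2 w a b * Defs.fprod Z m t s3 s4 w a' b').
  move=> m t s1 s2 s3 s4 a b a' b'.
  apply: (Intg_ext (f := fun w => \sum_(i : midx p | i m == o hp m) \sum_(i' : midx p | i' m == o hp m)
     Z (t + s1) w (setidx i a) * Z (t + s2) w (setidx i b) *
     Z (t + s3) w (setidx i' a') * Z (t + s4) w (setidx i' b'))).
    move=> w; rewrite !GZ mulr_suml; apply: eq_bigr => i _.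
    by rewrite mulr_sumr; apply: eq_bigr => i' _; rewrite !mulrA.
  by apply: Intg_sum => i; apply: Intg_sum => i'; exact: IntZ4.
have EZZ : forall t x y, fine 'E_P[fun w => Z t w x * Z t w y] = (x == y)%:R.
  move=> t x y; have := covZ t x y; rewrite covariance.unlock !EZ /=.
  move=> H; rewrite -[RHS]/(fine ((x == y)%:R)%:E) -H; congr fine.
  by apply: E_ext => w /=; rewrite -[RHS]/((Z t w x - 0) * (Z t w y - 0)) !subr0.
have setidx_eq : forall m (i : midx p) (a b : 'I_(p m)), (setidx i a == setidx i b) = (a == b).
  move=> m i a b; apply/eqP/eqP => [H|->] //.
  by have := congr1 (fun f : midx p => f m) H; rewrite !setidx_same.
pose sig m := (rho p m)%:R^-1 * (#|[pred i : midx p | i m == o hp m]|)%:R : R.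
have Sig0 : forall m t, Sigma P m 0 Z t = (sig m)%:M.
  move=> m t; apply/matrixP => a b; rewrite /Sigma !mxE.
  rewrite (@E_ext _ _ _ P _ (fun w => \sum_(i : midx p | i m == o hp m)
     Z (t + 0) w (setidx i a) * Z (t + 0) w (setidx i b))); last by move=> w; rewrite GZ.
  rewrite E_sum; last by move=> i; exact: IntZ2.
  under eq_bigr do rewrite EZZ setidx_eq.
  case: (a == b).
    by rewrite sumr_const /sig mulr1n.
  by rewrite big1 ?mulr0 ?mulr0n.
have SigX : forall m tau t, Sigma P m tau Xs t = c ^+ 2 *: (U m *m Sigma P m tau Z t *m (U m)^T).
  move=> m tau t; rewrite /Sigma.
  have -> : Emx P (Defs.fprod Xs m t 0 tau) =
      Emx P (fun w => c ^+ 2 *: (U m *m Defs.fprod Z m t 0 tau w *m (U m)^T)).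
    by congr (Emx P _); apply/funext => w; exact: FX.
  rewrite EmxL; last by move=> a b; exact: IntF.
  by rewrite conjZ !scalerA; congr (_ *: _); rewrite mulrC.
have BX : forall m tau t, Bmx P m tau Xs t =
    (c ^+ 2 * c ^+ 2) *: (U m *m Bmx P m tau Z t *m (U m)^T).
  move=> m tau t; rewrite /Bmx.
  have -> : Emx P (fun w => Defs.fprod Xs m t 0 tau w *m Defs.fprod Xs m t tau 0 w) =
      Emx P (fun w => (c ^+ 2 * c ^+ 2) *: (U m *m (Defs.fprod Z m t 0 tau w *m Defs.fprod Z m t tau 0 w) *m (U m)^T)).
    by congr (Emx P _); apply/funext => w; rewrite !FX prodconj.
  rewrite EmxL; last first.
    move=> a b; apply: (Intg_ext (f := fun w => \sum_l Defs.fprod Z m t 0 tau w a l * Defs.fprod Z m t tau 0 w l b)).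
      by move=> w; rewrite mxE.
    by apply: Intg_sum => l; exact: IntFF.
  by rewrite conjZ !scalerA; congr (_ *: _); rewrite mulrC.
have B4X : forall m s1 s2 s3 s4 (i j : 'I_(p m)) t, B4 P m s1 s2 s3 s4 i j Xs t =
    (c ^+ 2 * c ^+ 2) *: (U m *m (\sum_k \sum_l (U m i k * U m j l) *: B4 P m s1 s2 s3 s4 k l Z t) *m (U m)^T).
  move=> m s1 s2 s3 s4 i j t; rewrite /B4.
  have -> : Emx P (fun w => Defs.fprod Xs m t s1 s2 w i j *: Defs.fprod Xs m t s3 s4 w) =
      Emx P (fun w => (c ^+ 2 * c ^+ 2) *: (U m *m (\sum_k \sum_l (U m i k * U m j l) *:
         (Defs.fprod Z m t s1 s2 w k l *: Defs.fprod Z m t s3 s4 w)) *m (U m)^T)).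
    by congr (Emx P _); apply/funext => w; rewrite !FX ALG.
  rewrite EmxL; last first.
    move=> a b; apply: (Intg_ext (f := fun w => \sum_k \sum_l (U m i k * U m j l) *
        (Defs.fprod Z m t s1 s2 w k l * Defs.fprod Z m t s3 s4 w a b))).
      move=> w; rewrite summxE; apply: eq_bigr => k _; rewrite summxE; apply: eq_bigr => l _.
      by rewrite !mxE.
    by apply: Intg_sum => k; apply: Intg_sum => l; apply: Intg_scale; exact: IntFF.
  rewrite Emx_sum2; last first.
    move=> k l a b; apply: (Intg_ext (f := fun w => Defs.fprod Z m t s1 s2 w k l * Defs.fprod Z m t s3 s4 w a b)).
      by move=> w; rewrite [RHS]mxE.
    exact: IntFF.
  set S1 := (\sum_k \sum_l _).
  have -> : (\sum_k \sum_l (U m i k * U m j l) *: ((rho p m)%:R^-1 *: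
      Emx P (fun w => Defs.fprod Z m t s1 s2 w k l *: Defs.fprod Z m t s3 s4 w))) =
      (rho p m)%:R^-1 *: S1.
    rewrite /S1 scaler_sumr; apply: eq_bigr => k _; rewrite scaler_sumr; apply: eq_bigr => l _.
    by rewrite !scalerA mulrC.
  rewrite conjZ !scalerA; congr (_ *: _); exact: mulrC.
split.
  move=> Hd m tau t Hl; rewrite SigX conjK //; apply: is_diag_scale; exact: Hd.
split.
  move=> Hd m tau t Hl; rewrite BX conjK //; apply: is_diag_scale; exact: Hd.
move=> Hd m tau i j t Hl.
have SX0 : Sigma P m 0 Xs t = (c ^+ 2 * sig m)%:M.
  by rewrite SigX Sig0 mul_mx_scalar -scalemxAl HU' !scale_scalar_mx mulr1.
apply/is_diag_mxP => a b ab.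
have ab' : (a == b) = false by apply/negbTE.
rewrite /Cmx !B4X SX0 tr_scalar_mx mul_scalar_mx mul_mx_scalar.
rewrite conj_lin // conj_E //.
rewrite !mxBE !mxDE !mxZE !mxDE.
rewrite !mxSE !conjdelta idE ab' addr0.
have Hkl : forall k l, B4 P m 0 tau tau 0 k l Z t a b + B4 P m 0 tau 0 tau k l Z t a b
    - B4 P m tau tau 0 0 k l Z t a b =
    sig m * (sig m * (((a == k) && (b == l))%:R + ((b == k) && (a == l))%:R)).
  move=> k l; move/is_diag_mxP: (Hd m tau k l t Hl) => /(_ a b ab).
  rewrite /Cmx Sig0 tr_scalar_mx mul_scalar_mx mul_mx_scalar.
  rewrite !mxBE !mxDE !mxZE !mxDE !deltaE idE ab' addr0 [(a == l) && _]andbC.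
  by move/eqP; rewrite subr_eq0 => /eqP.
rewrite -!mulrDr -mulrBr sum2_lin.
under eq_bigr do under eq_bigr do rewrite Hkl.
rewrite (_ : \sum_k \sum_l _ = sig m * sig m *
   (\sum_k \sum_l U m i k * U m j l * ((a == k) && (b == l))%:R +
    \sum_k \sum_l U m i k * U m j l * ((b == k) && (a == l))%:R)); last first.
  rewrite -big_split mulr_sumr; apply: eq_bigr => k _.
  by rewrite -big_split mulr_sumr; apply: eq_bigr => l _ /=; ring.
rewrite !sum_delta; ring.
Qed.
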